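(* Every ultrametric space $X$ (i.e.\ a metric space with $d(x,z)\le\max(d(x,y),d(y,z))$ for all $x,y,z$) satisfies $h_\infty(X)=0$.
   Context: Coarse entropy: for $\delta>0$, $P(n,\delta,x_0)$ is the set of $\delta$-paths $(x_0,\dots,x_n)$ (sequences with $d(x_i,x_{i+1})\le\delta$) starting at $x_0$, with distance $\max_i d(x_i,y_i)$; $s(n,R,\delta,x_0)$ is the supremum of cardinalities of $R$-separated subsets (distinct elements at distance $\ge R$) of $P(n,\delta,x_0)$; $h_\infty(X)=\lim_{\delta\to\infty}\lim_{R\to\infty}\limsup_{n\to\infty}\frac1n\log s(n,R,\delta,x_0)$, independent of $x_0$. *)

(* Defs.v *)
From mathcomp Require Import all_boot all_order all_algebra.
From mathcomp Require Import all_classical all_reals all_analysis.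
Set Implicit Arguments. Unset Strict Implicit. Unset Printing Implicit Defensive.
Import Order.TTheory GRing.Theory Num.Theory.
Local Open Scope ring_scope.
Local Open Scope classical_set_scope.

Section Coarse.
Variables (R : realType) (X : Type) (d : X -> X -> R).

Definition is_metric : Prop :=
  [/\ forall x y, 0 <= d x y,
      forall x y, d x y = 0 <-> x = y,
      forall x y, d x y = d y x &
      forall x y z, d x z <= d x y + d y z].

Definition is_ultrametric : Prop :=
  forall x y z, d x z <= Num.max (d x y) (d y z).

(* a path (x_0, ..., x_n) is a function 'I_(n+1) -> X *)
Definition path_seq (n : nat) := 'I_n.+1 -> X.

Definition delta_path (n : nat) (delta : R) (x0 : X) (p : path_seq n) : Prop :=
  p ord0 = x0 /\
  forall i : 'I_n.+1, forall (Hi : (i.+1 < n.+1)%N),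
    d (p i) (p (Ordinal Hi)) <= delta.

Definition path_dist (n : nat) (p q : path_seq n) : R :=
  \big[Num.max/0]_(i < n.+1) d (p i) (q i).

(* a finite R-separated subset of P(n,delta,x0) with k elements, given as an
   injective enumeration g : 'I_k -> P(n,delta,x0) *)
Definition separated_family (n : nat) (Rs delta : R) (x0 : X) (k : nat)
  (g : 'I_k -> path_seq n) : Prop :=
  (forall i, delta_path delta x0 (g i)) /\
  (forall i j, i <> j -> g i <> g j /\ Rs <= path_dist (g i) (g j)).

(* s(n,R,delta,x0): supremum of cardinalities of R-separated subsets
   (the supremum over finite ones; it is +oo iff there are arbitrarily large,
   equivalently infinite, ones) *)
Definition sep_number (n : nat) (Rs delta : R) (x0 : X) : \bar R :=
  ereal_sup [set (k%:R)%:E | k in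
     [set k : nat | exists g : 'I_k -> path_seq n, separated_family Rs delta x0 g]].

Definition elog (s : \bar R) : \bar R :=
  match s with
  | r%:E => (ln r)%:E
  | +oo%E => +oo%E
  | -oo%E => -oo%E
  end.

Definition entropy_rate (Rs delta : R) (x0 : X) : \bar R :=
  limn_esup (fun n : nat => ((n%:R)^-1)%:E * elog (sep_number n Rs delta x0))%E.

Definition coarse_entropy (x0 : X) : \bar R :=
  lim ((fun delta : R =>
          lim ((fun Rs : R => entropy_rate Rs delta x0) x @[x --> +oo]))
       y @[y --> +oo]).

End Coarse.

(* Main.v *)
Require Import Defs.
From mathcomp Require Import all_boot all_order all_algebra.
From mathcomp Require Import all_classical all_reals all_analysis.
Import Order.TTheory GRing.Theory Num.Theory.
Set Implicit Arguments. Unset Strict Implicit.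
Local Open Scope ring_scope.
Local Open Scope classical_set_scope.

Section Aux.
Variables (R : realType) (X : Type) (d : X -> X -> R) (x0 : X).
Hypothesis hm : is_metric d.
Hypothesis hu : is_ultrametric d.

Lemma dxx x : d x x = 0.
Proof. by case: hm => _ h _ _; apply/h. Qed.

Lemma start_bound n (delta : R) (p : path_seq X n) : 0 <= delta ->
  delta_path d delta x0 p -> forall i, d x0 (p i) <= delta.
Proof.
move=> d0 [h0 hs] [m Hm].
elim: m Hm => [|m IH] Hm.
  have -> : Ordinal Hm = ord0 by apply: val_inj.
  by rewrite h0 dxx.
apply: le_trans (hu _ (p (Ordinal (ltnW Hm))) _) _.
by rewrite ge_max IH /=; exact: (hs (Ordinal (ltnW Hm)) Hm).
Qed.

Lemma pdist_bound n (delta : R) (p q : path_seq X n) : 0 <= delta ->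
  delta_path d delta x0 p -> delta_path d delta x0 q -> path_dist d p q <= delta.
Proof.
move=> d0 hp hq; apply: bigmax_le => // i _.
apply: le_trans (hu _ x0 _) _.
have [_ _ hsym _] := hm.
by rewrite ge_max hsym (start_bound d0 hp) (start_bound d0 hq).
Qed.

Lemma sep_one n (Rs delta : R) : 0 <= delta -> delta < Rs ->
  sep_number d n Rs delta x0 = 1%E.
Proof.
move=> d0 dR; apply/eqP; rewrite eq_le; apply/andP; split.
  apply: ge_ereal_sup => _ [k [g [hg hsep]] <-].
  rewrite lee_fin.
  case: k g hg hsep => [|[|k]] g hg hsep; rewrite ?ler01 ?lexx //.
  exfalso.
  have [_ ] := hsep ord0 (Ordinal (isT : (1 < k.+2)%N)) ltac:(by move=> /(congr1 val)).
  move=> hle; have := pdist_bound d0 (hg ord0) (hg (Ordinal (isT : (1 < k.+2)%N))).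
  by move=> /(le_trans hle); rewrite leNgt dR.
apply: ereal_sup_ubound; exists 1%N => //.
exists (fun _ _ => x0); split.
  move=> _; split => // i Hi; by rewrite dxx.
by move=> i j; rewrite !ord1.
Qed.

Lemma rate_zero (Rs delta : R) : 0 <= delta -> delta < Rs ->
  entropy_rate d Rs delta x0 = 0%E.
Proof.
move=> d0 dR; rewrite /entropy_rate.
under eq_fun do rewrite sep_one //= ln1 mule0.
rewrite limn_esup_lim.
have -> : esups (fun _ : nat => 0%E) = (fun _ => 0%E :> \bar R).
  apply/funext => n /=; rewrite /esups /=.
  have -> : sdrop (fun _ : nat => 0%E : \bar R) n = [set 0%E].
    apply/seteqP; split => x /=.
      by case=> ? _ <-.
    by move=> ->; exists n => /=.
  exact: ereal_sup1.
exact: lim_cst.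
Qed.

End Aux.

Theorem mainTheorem9 (R : realType) (X : Type) (d : X -> X -> R) (x0 : X) :
  is_metric d -> is_ultrametric d -> coarse_entropy d x0 = 0%E.
Proof.
move=> hm hu; rewrite /coarse_entropy.
apply: cvg_lim => //.
apply: cvg_near_cst.
near=> delta.
apply: cvg_lim => //.
apply: cvg_near_cst.
near=> Rs.
apply: rate_zero => //.
Unshelve. all: by end_near. Qed.
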